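(* Let $\beta=\pi/4$ and let $F,G_1,G_2$, $X_{\pm\pm}$, $s_{\max}$, $v$, $\bar M$ be as in the context, and $N=(0,0,1)^T$. Let $\theta(\alpha)=\arcsin\left(\frac{-2\sqrt2\sin\alpha\cos\alpha}{1+\cos^2\alpha}\right)$. For every integer $n$ and every $0<\alpha<\pi/4$, $$\bar M^n(0,\alpha)N=\begin{pmatrix}0\\ \sin(4n\theta(\alpha))\\ \cos(4n\theta(\alpha))\end{pmatrix},\qquad \bar M^n(s_{\max},\alpha)\,e^{s_{\max}X_{++}}N=\begin{pmatrix}0\\ \sin((4n+1)\theta(\alpha))\\ \cos((4n+1)\theta(\alpha))\end{pmatrix}.$$
   Context: $F=\cos\alpha\begin{pmatrix}0&-1&0\\1&0&0\\0&0&0\end{pmatrix}$, $G_1=\sin\alpha\sin\beta\begin{pmatrix}0&0&0\\0&0&-1\\0&1&0\end{pmatrix}$, $G_2=\sin\alpha\cos\beta\begin{pmatrix}0&0&-1\\0&0&0\\1&0&0\end{pmatrix}$, and $X_{ab}=F+aG_1+bG_2$ for $a,b\in\{+1,-1\}$. $s_{\max}=\arccos\left(-\frac{\sin^2\alpha}{1+\cos^2\alpha}\right)$. For $s\in[0,s_{\max}]$, $v(s)=\arccos\left[\frac{d-A(s)-B(s)-C(s)}{e-A(s)+B(s)}\right]$ with $A(s)=8\cos\alpha\sin^2\alpha\sin s$, $B(s)=2\sin^2(2\alpha)\cos s$, $C(s)=4\sin^4\alpha\cos(2s)$, $d=\sin^2(2\alpha)$, $e=5+2\cos2\alpha+\cos4\alpha$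 (the duration of interior bang arcs of normal extremals of $\dot x=(F+u_1G_1+u_2G_2)x$ on $S^2$ from $N$ with first bang arc of duration $s$). $\bar M(s,\alpha)=e^{v(s)X_{++}}e^{v(s)X_{-+}}e^{v(s)X_{--}}e^{v(s)X_{+-}}$. *)

(* Defs.v *)
From HB Require Import structures.
From mathcomp Require Import all_boot all_order all_algebra.
From mathcomp Require Import all_classical all_reals all_analysis.
Set Implicit Arguments. Unset Strict Implicit. Unset Printing Implicit Defensive.
Import Order.TTheory GRing.Theory Num.Theory.
Import numFieldNormedType.Exports.
Local Open Scope ring_scope.
Local Open Scope classical_set_scope.

Section Defs.
Variable R : realType.

Definition mx3 (a11 a12 a13 a21 a22 a23 a31 a32 a33 : R) : 'M[R]_3 :=
  \matrix_(i < 3, j < 3)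
    nth 0 (nth [::] [:: [:: a11; a12; a13]; [:: a21; a22; a23]; [:: a31; a32; a33]] i) j.

Definition vec3 (x y z : R) : 'cV[R]_3 := \col_(i < 3) [:: x; y; z]`_i.

Definition expmx (A : 'M[R]_3) : 'M[R]_3 :=
  lim (series (fun k : nat => (k`!%:R)^-1 *: A ^+ k) @ \oo).

Definition Fm (al : R) : 'M[R]_3 := cos al *: mx3 0 (-1) 0  1 0 0  0 0 0.
Definition G1 (al be : R) : 'M[R]_3 :=
  (sin al * sin be) *: mx3 0 0 0  0 0 (-1)  0 1 0.
Definition G2 (al be : R) : 'M[R]_3 :=
  (sin al * cos be) *: mx3 0 0 (-1)  0 0 0  1 0 0.

(* X_{ab} = F + a G1 + b G2, with a, b given as booleans: true = +1, false = -1 *)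
Definition sgn (b : bool) : R := if b then 1 else -1.
Definition Xab (al be : R) (a b : bool) : 'M[R]_3 :=
  Fm al + sgn a *: G1 al be + sgn b *: G2 al be.

Definition s_max (al : R) : R :=
  acos (- (sin al ^+ 2) / (1 + cos al ^+ 2)).

Definition Acoef (al s : R) : R := 8 * cos al * sin al ^+ 2 * sin s.
Definition Bcoef (al s : R) : R := 2 * sin (2 * al) ^+ 2 * cos s.
Definition Ccoef (al s : R) : R := 4 * sin al ^+ 4 * cos (2 * s).
Definition dcoef (al : R) : R := sin (2 * al) ^+ 2.
Definition ecoef (al : R) : R := 5 + 2 * cos (2 * al) + cos (4 * al).

Definition v (al s : R) : R :=
  acos ((dcoef al - Acoef al s - Bcoef al s - Ccoef al s) /
        (ecoef al - Acoef al s + Bcoef al s)).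

Definition Mbar (be s al : R) : 'M[R]_3 :=
  expmx (v al s *: Xab al be true true) *m
  expmx (v al s *: Xab al be false true) *m
  expmx (v al s *: Xab al be false false) *m
  expmx (v al s *: Xab al be true false).

Definition Npole : 'cV[R]_3 := vec3 0 0 1.

Definition theta (al : R) : R :=
  asin ((- 2 * Num.sqrt 2 * sin al * cos al) / (1 + cos al ^+ 2)).

End Defs.

(* Main.v *)
Require Import Defs.
From HB Require Import structures.
From mathcomp Require Import all_boot all_order all_algebra.
From mathcomp Require Import all_classical all_reals all_analysis.
From mathcomp Require Import ring lra.
Import Order.TTheory GRing.Theory Num.Theory.
Import numFieldNormedType.Exports.
Local Open Scope ring_scope.

Set Implicit Arguments. Unset Strict Implicit.
Section SA.
Local Open Scope classical_set_scope.
Variable R : realType.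

Lemma mx3_mul (a11 a12 a13 a21 a22 a23 a31 a32 a33 b11 b12 b13 b21 b22 b23 b31 b32 b33 : R) :
  mx3 a11 a12 a13 a21 a22 a23 a31 a32 a33 *m mx3 b11 b12 b13 b21 b22 b23 b31 b32 b33 =
  mx3 (a11*b11 + a12*b21 + a13*b31) (a11*b12 + a12*b22 + a13*b32) (a11*b13 + a12*b23 + a13*b33)
      (a21*b11 + a22*b21 + a23*b31) (a21*b12 + a22*b22 + a23*b32) (a21*b13 + a22*b23 + a23*b33)
      (a31*b11 + a32*b21 + a33*b31) (a31*b12 + a32*b22 + a33*b32) (a31*b13 + a32*b23 + a33*b33).
Proof.
apply/matrixP => i j; rewrite !mxE !big_ord_recr big_ord0 /= !mxE add0r.
by case: i => [[|[|[|i]]] Hi] //; case: j => [[|[|[|j]]] Hj].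
Qed.

Lemma mx3_add (a11 a12 a13 a21 a22 a23 a31 a32 a33 b11 b12 b13 b21 b22 b23 b31 b32 b33 : R) :
  mx3 a11 a12 a13 a21 a22 a23 a31 a32 a33 + mx3 b11 b12 b13 b21 b22 b23 b31 b32 b33 =
  mx3 (a11+b11) (a12+b12) (a13+b13) (a21+b21) (a22+b22) (a23+b23) (a31+b31) (a32+b32) (a33+b33).
Proof.
apply/matrixP => i j; rewrite !mxE.
by case: i => [[|[|[|i]]] Hi] //; case: j => [[|[|[|j]]] Hj].
Qed.

Lemma mx3_scale (k a11 a12 a13 a21 a22 a23 a31 a32 a33 : R) :
  k *: mx3 a11 a12 a13 a21 a22 a23 a31 a32 a33 =
  mx3 (k*a11) (k*a12) (k*a13) (k*a21) (k*a22) (k*a23) (k*a31) (k*a32) (k*a33).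
Proof.
apply/matrixP => i j; rewrite !mxE.
by case: i => [[|[|[|i]]] Hi] //; case: j => [[|[|[|j]]] Hj].
Qed.

Lemma mx3_1 : (1 : 'M[R]_3) = mx3 1 0 0 0 1 0 0 0 1.
Proof.
apply/matrixP => i j; rewrite !mxE.
by case: i => [[|[|[|i]]] Hi] //; case: j => [[|[|[|j]]] Hj].
Qed.

Lemma mx3_vec (a11 a12 a13 a21 a22 a23 a31 a32 a33 x y z : R) :
  mx3 a11 a12 a13 a21 a22 a23 a31 a32 a33 *m vec3 x y z =
  vec3 (a11*x + a12*y + a13*z) (a21*x + a22*y + a23*z) (a31*x + a32*y + a33*z).
Proof.
apply/matrixP => i j; rewrite !mxE !big_ord_recr big_ord0 /= !mxE add0r.
by case: i => [[|[|[|i]]] Hi] //; case: j => [[|j] Hj].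
Qed.

Definition Xg (c u a b : R) := mx3 0 (-c) (-(b*u)) c 0 (-(a*u)) (b*u) (a*u) 0.

Lemma Xsq c u a b : let n := c^+2 + a^+2*u^+2 + b^+2*u^+2 in
  Xg c u a b ^+ 2 = mx3 (a*u*(a*u) - n) (a*u*(-(b*u))) (a*u*c)
                        (-(b*u)*(a*u)) (-(b*u)*(-(b*u)) - n) (-(b*u)*c)
                        (c*(a*u)) (c*(-(b*u))) (c*c - n).
Proof.
move=> n; rewrite expr2 -mulmxE /Xg mx3_mul /n.
congr (mx3 _ _ _ _ _ _ _ _ _); ring.
Qed.

Lemma Xcube c u a b : c^+2 + a^+2*u^+2 + b^+2*u^+2 = 1 -> Xg c u a b ^+ 3 = - Xg c u a b.
Proof.
move=> hn; have -> : - Xg c u a b = (-1) *: Xg c u a b by rewrite scaleN1r.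
rewrite exprS Xsq hn -mulmxE /Xg mx3_mul mx3_scale.
congr (mx3 _ _ _ _ _ _ _ _ _); ring.
Qed.

Definition Emx (c u sg k a b : R) :=
  let w1 := a * u in let w2 := - (b * u) in let w3 := c in
  mx3 (k + (1-k)*w1*w1) (- sg*w3 + (1-k)*w1*w2) (sg*w2 + (1-k)*w1*w3)
      (sg*w3 + (1-k)*w2*w1) (k + (1-k)*w2*w2) (-sg*w1 + (1-k)*w2*w3)
      (-sg*w2 + (1-k)*w3*w1) (sg*w1 + (1-k)*w3*w2) (k + (1-k)*w3*w3).

Lemma Rodrigues c u a b sg k : c^+2 + a^+2*u^+2 + b^+2*u^+2 = 1 ->
  1 + sg *: Xg c u a b + (1 - k) *: Xg c u a b ^+ 2 = Emx c u sg k a b.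
Proof.
move=> hn; rewrite Xsq hn mx3_1 /Xg !mx3_scale !mx3_add /Emx.
congr (mx3 _ _ _ _ _ _ _ _ _); ring.
Qed.

Definition sgf (c : R) := 2 * c / (1 + c ^+ 2).
Definition kf (c : R) := - (1 - c ^+ 2) / (1 + c ^+ 2).
Definition ctf (c : R) := (3 * c ^+ 2 - 1) / (1 + c ^+ 2).
Definition stf (c u : R) := - 4 * u * c / (1 + c ^+ 2).
Definition C4f (ct st : R) := (ct*ct - st*st) * (ct*ct - st*st) - (2*st*ct) * (2*st*ct).
Definition S4f (ct st : R) := 2 * (2*st*ct) * (ct*ct - st*st).

Lemma key_m (m c u : R) : c = (1 - 2 * m ^+ 2) / (1 + 2 * m ^+ 2) -> u = 2 * m / (1 + 2 * m ^+ 2) ->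
  Emx c u (sgf c) (kf c) 1 1 *m Emx c u (sgf c) (kf c) (-1) 1 *m
  Emx c u (sgf c) (kf c) (-1) (-1) *m Emx c u (sgf c) (kf c) 1 (-1) =
  mx3 1 0 0 0 (C4f (ctf c) (stf c u)) (S4f (ctf c) (stf c u)) 0 (- S4f (ctf c) (stf c u)) (C4f (ctf c) (stf c u)).
Proof.
move=> -> ->.
have hP : 0 < 1 + 2 * m ^+ 2 by have := sqr_ge0 m; lra.
rewrite /Emx !mx3_mul.
congr (mx3 _ _ _ _ _ _ _ _ _); rewrite /S4f /C4f /ctf /stf /sgf /kf.
all: field.
all: rewrite (lt0r_neq0 hP) /=; apply: lt0r_neq0.
all: have := exprn_gt0 2 hP; have := sqr_ge0 (1 - 2 * m ^+ 2); lra.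
Qed.

Lemma Kpow_odd (K : 'M[R]_3) j : K ^+ 3 = - K -> K ^+ (j.*2.+1) = (-1) ^+ j *: K.
Proof.
move=> HK; elim: j => [|j IH]; first by rewrite expr1 expr0 scale1r.
have -> : (j.+1).*2.+1 = (j.*2.+1 + 2)%N by rewrite doubleS addn2.
by rewrite exprD IH -scalerAl -exprS HK scalerN exprS mulN1r scaleNr.
Qed.

Lemma Kpow_even (K : 'M[R]_3) j : K ^+ 3 = - K -> K ^+ (j.*2.+2) = (-1) ^+ j *: K ^+ 2.
Proof.
move=> HK; by rewrite exprS Kpow_odd // -scalerAr -expr2.
Qed.

Lemma term_eq (K : 'M[R]_3) (t : R) k : K ^+ 3 = - K ->
  (k`!%:R)^-1 *: (t *: K) ^+ k =
  sin_coeff t k *: K - cos_coeff t k *: K ^+ 2 + (k == 0)%:R *: (1 + K ^+ 2).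
Proof.
move=> HK; rewrite exprZn scalerA.
have [|] := boolP (odd k) => ok.
- have kE : k = (k./2).*2.+1 by rewrite -[LHS]odd_double_half ok add1n.
  rewrite kE Kpow_odd // /sin_coeff /cos_coeff /= odd_double /= doubleK.
  rewrite !mul0r scale0r subr0 scale0r addr0 scalerA; congr (_ *: _).
  by rewrite mul1r; ring.
- have kE : k = (k./2).*2 by rewrite -[LHS]odd_double_half (negbTE ok) add0n.
  move: kE; case E: (k./2) => [|j] kE.
    rewrite kE double0 /sin_coeff /cos_coeff /= !expr0 expr0z fact0 invr1 !mul0r !mulr1 scale0r sub0r !scale1r addrCA addNr addr0 //.
  rewrite kE doubleS Kpow_even // /sin_coeff /cos_coeff /= odd_double /=.
  rewrite doubleK.
  rewrite !mul0r scale0r sub0r scale0r addr0 scalerA -scaleNr; congr (_ *: _).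
  by rewrite -exprnP (exprS (-1)); ring.
Qed.


Lemma series_sum (K : 'M[R]_3) (t : R) n : K ^+ 3 = - K ->
  series (fun k : nat => (k`!%:R)^-1 *: (t *: K) ^+ k) n =
  series (sin_coeff t) n *: K - series (cos_coeff t) n *: K ^+ 2 + (0 < n)%:R *: (1 + K ^+ 2).
Proof.
move=> HK; elim: n => [|n IH].
  by rewrite /series /= !big_geq // !scale0r subrr addr0.
rewrite !seriesSr IH term_eq // !scalerDl.
have -> : (0 < n.+1)%:R = (0 < n)%:R + (n == 0)%:R :> R by case: n {IH} => [|m] /=; rewrite ?add0r ?addr0.
rewrite scalerDl.
set a := series _ n *: K; set b := series _ n *: _; set c := _ *: (1 + _).
set a' := _ *: K; set b' := _ *: (K ^+ 2); set c' := _ *: (1 + _).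
by rewrite addrACA [a - b + _]addrACA opprD.
Qed.

Lemma cvg_sin_series (t : R) : series (sin_coeff t) @ \oo --> sin t.
Proof. rewrite unlock; exact: is_cvg_series_sin_coeff. Qed.
Lemma cvg_cos_series (t : R) : series (cos_coeff t) @ \oo --> cos t.
Proof. rewrite unlock; exact: is_cvg_series_cos_coeff. Qed.

Lemma expmx_rot (K : 'M[R]_3) (t : R) : K ^+ 3 = - K ->
  expmx (t *: K) = 1 + sin t *: K + (1 - cos t) *: K ^+ 2.
Proof.
move=> HK; rewrite /expmx.
apply: (cvg_lim (@norm_hausdorff _ _)).
rewrite -cvg_shiftS.
have -> : [sequence series (fun k : nat => (k`!%:R)^-1 *: (t *: K) ^+ k) n.+1]_n =
  (fun n => series (sin_coeff t) n.+1 *: K - series (cos_coeff t) n.+1 *: K ^+ 2 + (1 + K ^+ 2)).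
  by apply/funext => n /=; rewrite series_sum // scale1r.
have -> : 1 + sin t *: K + (1 - cos t) *: K ^+ 2 = sin t *: K - cos t *: K ^+ 2 + (1 + K ^+ 2).
  by rewrite scalerBl scale1r [RHS]addrC addrACA.
apply: cvgD; last exact: cvg_cst.
apply: cvgB; apply: cvgZr_tmp; rewrite (cvg_shiftS (series _)).
  exact: cvg_sin_series.
exact: cvg_cos_series.
Qed.

End SA.

Section SB.
Local Open Scope classical_set_scope.
Variable R : realType.

Definition Rx (p : R) : 'M[R]_3 := mx3 1 0 0 0 (cos p) (sin p) 0 (- sin p) (cos p).

Lemma Rx_mul a b : Rx a * Rx b = Rx (a + b).
Proof.
rewrite -mulmxE /Rx mx3_mul sinD cosD; congr (mx3 _ _ _ _ _ _ _ _ _); ring.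
Qed.

Lemma Rx0 : Rx 0 = 1.
Proof. by rewrite /Rx sin0 cos0 oppr0 mx3_1. Qed.

Lemma RxXn p k : Rx p ^+ k = Rx (k%:R * p).
Proof.
elim: k => [|k IH]; first by rewrite expr0 mul0r Rx0.
by rewrite exprS IH Rx_mul mulrS mulrDl mul1r.
Qed.

Lemma Rx_inv p : (Rx p)^-1 = Rx (- p).
Proof.
have hu : Rx p \is a GRing.unit.
  by apply/unitrP; exists (Rx (- p)); rewrite !Rx_mul addNr subrr Rx0.
by rewrite -[RHS](mulKr hu) Rx_mul subrr Rx0 mulr1.
Qed.

Lemma RxXz p (n : int) : Rx p ^ n = Rx (n%:~R * p).
Proof.
case: n => k; first by rewrite /exprz RxXn.
by rewrite /exprz RxXn Rx_inv NegzE mulrNz mulNr.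
Qed.

Lemma param (c y k : R) : 0 < k -> c ^+ 2 + k * y ^+ 2 = 1 -> 1 + c != 0 ->
  exists m, c = (1 - k * m ^+ 2) / (1 + k * m ^+ 2) /\ y = 2 * m / (1 + k * m ^+ 2).
Proof.
move=> hk h hc; exists (y / (1 + c)).
have e : 1 + k * (y / (1 + c)) ^+ 2 = 2 / (1 + c).
  rewrite expr_div_n mulrA (_ : k * y ^+ 2 = 1 - c ^+ 2); last by lra.
  by field.
have e' : k * (y / (1 + c)) ^+ 2 = (1 - c) / (1 + c).
  by apply: (addrI 1); rewrite e; field.
rewrite e e'; split; field; rewrite ?hc //.

Qed.

End SB.

Section SC.
Local Open Scope classical_set_scope.
Variable R : realType.

Lemma pi4_facts : sin (pi / 4 : R) = cos (pi / 4) /\ sin (pi / 4 : R) ^+ 2 = 1 / 2 /\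
  0 < sin (pi / 4 : R) /\ Num.sqrt 2 = 2 * sin (pi / 4 : R).
Proof.
have hpi := pi_gt0 R.
have e1 : sin (pi / 4 : R) = cos (pi / 4).
  by rewrite -cosBpihalf (_ : pi / 4 - pi / 2 = - (pi / 4)) ?cosN //; field.
have e2 : sin (pi / 4 : R) ^+ 2 = 1 / 2.
  have := cos2Dsin2 (pi / 4 : R); rewrite -e1; lra.
have e3 : 0 < sin (pi / 4 : R) by apply: sin_gt0_pihalf; lra.
split => //; split => //; split => //.
have h : Num.sqrt 2 = Num.sqrt ((2 * sin (pi / 4 : R)) ^+ 2).
  by rewrite exprMn e2; congr Num.sqrt; field.
by rewrite h sqrtr_sqr ger0_norm //; lra.
Qed.


Lemma al_facts (al : R) : 0 < al < pi / 4 ->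
  [/\ 0 < sin al, 0 < cos al, sin al ^+ 2 + cos al ^+ 2 = 1 & 1 < 3 * cos al ^+ 2].
Proof.
move=> /andP[h0 h1]; have hpi := pi_gt0 R.
have hs : 0 < sin al by apply: sin_gt0_pihalf; apply/andP; split; lra.
have hc : 0 < cos al by apply: cos_gt0_pihalf; apply/andP; split; lra.
have hsc : sin al ^+ 2 + cos al ^+ 2 = 1 by rewrite addrC cos2Dsin2.
have h2 : 0 < cos (al + al) by apply: cos_gt0_pihalf; apply/andP; split; lra.
rewrite cosD -!expr2 in h2.
split => //; lra.
Qed.

Lemma X_eq (al : R) a b :
  Xab al (pi / 4) a b = Xg (cos al) (sin al * sin (pi / 4)) (sgn R a) (sgn R b).
Proof.
have [e1 _] := pi4_facts.
rewrite /Xab /Fm /G1 /G2 -e1 !mx3_scale !mx3_add /Xg.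
congr (mx3 _ _ _ _ _ _ _ _ _); ring.
Qed.

Lemma sgn2 b : sgn R b ^+ 2 = 1.
Proof. by case: b; rewrite /sgn ?sqrrN expr1n. Qed.

Lemma hn_eq (al : R) a b : sin al ^+ 2 + cos al ^+ 2 = 1 ->
  cos al ^+ 2 + sgn R a ^+ 2 * (sin al * sin (pi / 4)) ^+ 2 + sgn R b ^+ 2 * (sin al * sin (pi / 4)) ^+ 2 = 1.
Proof.
have [_ [e2 _]] := pi4_facts.
move=> h; rewrite !sgn2 exprMn e2; lra.
Qed.

Lemma smax_facts (al : R) : 0 < al < pi / 4 ->
  cos (s_max al) = kf (cos al) /\ sin (s_max al) = sgf (cos al).
Proof.
move=> hal; have [hs hc hsc h3] := al_facts hal.
have hq : 0 < 1 + cos al ^+ 2 by have := sqr_ge0 (cos al); lra.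
have hk : - (sin al ^+ 2) / (1 + cos al ^+ 2) = kf (cos al).
  by rewrite /kf (_ : sin al ^+ 2 = 1 - cos al ^+ 2) //; lra.
have hb : -1 <= kf (cos al) <= 1.
  rewrite -hk; apply/andP; split.
    rewrite ler_pdivlMr //; lra.
  rewrite ler_pdivrMr //; have := sqr_ge0 (sin al); lra.
rewrite /s_max hk; split.
  by rewrite acosK // in_itv /=.
rewrite sin_acos //.
have -> : 1 - kf (cos al) ^+ 2 = sgf (cos al) ^+ 2.
  rewrite /kf /sgf; field; exact: lt0r_neq0.
rewrite sqrtr_sqr ger0_norm // /sgf; apply: divr_ge0; lra.
Qed.

Lemma Eexp (al : R) a b : 0 < al < pi / 4 ->
  expmx (s_max al *: Xab al (pi / 4) a b) =
  Emx (cos al) (sin al * sin (pi / 4)) (sgf (cos al)) (kf (cos al)) (sgn R a) (sgn R b).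
Proof.
move=> hal; have [hs hc hsc h3] := al_facts hal.
have [hcos hsin] := smax_facts hal.
rewrite X_eq expmx_rot; last by apply: Xcube; apply: hn_eq.
by rewrite hcos hsin Rodrigues // hn_eq.
Qed.

Lemma trig2 (al : R) : sin (2 * al) = 2 * sin al * cos al /\
  cos (2 * al) = cos al ^+ 2 - sin al ^+ 2 /\
  cos (4 * al) = (cos al ^+ 2 - sin al ^+ 2) ^+ 2 - (2 * sin al * cos al) ^+ 2.
Proof.
have e2 : 2 * al = al + al by ring.
have h2s : sin (2 * al) = 2 * sin al * cos al by rewrite e2 sinD; ring.
have h2c : cos (2 * al) = cos al ^+ 2 - sin al ^+ 2 by rewrite e2 cosD; ring.
split => //; split => //.
have e4 : 4 * al = 2 * al + 2 * al by ring.
by rewrite e4 cosD h2s h2c; ring.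
Qed.

Lemma smax_eq (al : R) : s_max al = acos (kf (cos al)).
Proof.
congr acos; rewrite /kf (_ : sin al ^+ 2 = 1 - cos al ^+ 2) //.
by rewrite sin2cos2.
Qed.

Lemma v0_eq (al : R) : 0 < al < pi / 4 -> v al 0 = s_max al.
Proof.
move=> hal; have [hs hc hsc h3] := al_facts hal.
have [h2s [h2c h4c]] := trig2 al.
have hq : 0 < 1 + cos al ^+ 2 by have := sqr_ge0 (cos al); lra.
have [t [ect est]] : exists t, cos al = (1 - 1 * t ^+ 2) / (1 + 1 * t ^+ 2) /\
   sin al = 2 * t / (1 + 1 * t ^+ 2).
  by apply: param => //; [lra | apply: lt0r_neq0; lra].
have ht : 0 < 1 + t ^+ 2 by have := sqr_ge0 t; lra.
have hden : ecoef al - Acoef al 0 + Bcoef al 0 = 4 * (1 + cos al ^+ 2).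
  rewrite /ecoef /Acoef /Bcoef sin0 cos0 h2s h2c h4c est ect.
  field; apply: lt0r_neq0; lra.
have hnum : dcoef al - Acoef al 0 - Bcoef al 0 - Ccoef al 0 = kf (cos al) * (4 * (1 + cos al ^+ 2)).
  rewrite /dcoef /Acoef /Bcoef /Ccoef /kf sin0 !mulr0 cos0 h2s est ect.
  field; rewrite (lt0r_neq0 ht) /=; apply: lt0r_neq0.
  have := exprn_gt0 2 ht; have := sqr_ge0 (1 - t ^+ 2); lra.
rewrite smax_eq /v hden hnum mulfK //.
by apply: lt0r_neq0; lra.
Qed.

Lemma vmax_eq (al : R) : 0 < al < pi / 4 -> v al (s_max al) = s_max al.
Proof.
move=> hal; have [hs hc hsc h3] := al_facts hal.
have [h2s [h2c h4c]] := trig2 al.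
have [_ [hw2 _]] := trig2 (s_max al).
have [hcos hsin] := smax_facts hal.
have hq : 0 < 1 + cos al ^+ 2 by have := sqr_ge0 (cos al); lra.
have [t [ect est]] : exists t, cos al = (1 - 1 * t ^+ 2) / (1 + 1 * t ^+ 2) /\
   sin al = 2 * t / (1 + 1 * t ^+ 2).
  by apply: param => //; [lra | apply: lt0r_neq0; lra].
have ht : 0 < 1 + t ^+ 2 by have := sqr_ge0 t; lra.
have ht2 : (1 + t ^+ 2) ^+ 2 + (1 - t ^+ 2) ^+ 2 != 0.
  apply: lt0r_neq0; have := exprn_gt0 2 ht; have := sqr_ge0 (1 - t ^+ 2); lra.
have hden : ecoef al - Acoef al (s_max al) + Bcoef al (s_max al) =
   4 * (3 * cos al ^+ 2 - 1) ^+ 2 / (1 + cos al ^+ 2).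
  rewrite /ecoef /Acoef /Bcoef hsin hcos /sgf /kf h2s h2c h4c est ect.
  by field; rewrite (lt0r_neq0 ht) ht2.
have hnum : dcoef al - Acoef al (s_max al) - Bcoef al (s_max al) - Ccoef al (s_max al) =
   kf (cos al) * (4 * (3 * cos al ^+ 2 - 1) ^+ 2 / (1 + cos al ^+ 2)).
  rewrite /dcoef /Acoef /Bcoef /Ccoef hw2 hsin hcos /sgf /kf h2s est ect.
  by field; rewrite (lt0r_neq0 ht) ht2.
rewrite [RHS]smax_eq /v hden hnum mulfK //.
apply: lt0r_neq0; apply: divr_gt0 => //.
by rewrite mulr_gt0 // exprn_gt0 //; lra.
Qed.

Lemma theta_facts (al : R) : 0 < al < pi / 4 ->
  sin (theta al) = stf (cos al) (sin al * sin (pi / 4)) /\ cos (theta al) = ctf (cos al).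
Proof.
move=> hal; have [hs hc hsc h3] := al_facts hal.
have [e1 [e2 [e3 e4]]] := pi4_facts.
have hth : theta al = asin (stf (cos al) (sin al * sin (pi / 4))).
  by rewrite /theta e4 /stf; congr (asin (_ / _)); ring.
have hcu : cos al ^+ 2 + 2 * (sin al * sin (pi / 4)) ^+ 2 = 1 by rewrite exprMn e2; lra.
have hc1 : 1 + cos al != 0 by apply: lt0r_neq0; lra.
have [m [ec eu]] := param (k:=2) (ltr0Sn _ 1) hcu hc1.
have hP : 0 < 1 + 2 * m ^+ 2 by have := sqr_ge0 m; lra.
have hrel : 1 - stf (cos al) (sin al * sin (pi / 4)) ^+ 2 = ctf (cos al) ^+ 2.
  rewrite /stf /ctf eu ec; field; rewrite (lt0r_neq0 hP) /=; apply: lt0r_neq0.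
  have := exprn_gt0 2 hP; have := sqr_ge0 (1 - 2 * m ^+ 2); lra.
have hb : -1 <= stf (cos al) (sin al * sin (pi / 4)) <= 1.
  have := sqr_ge0 (ctf (cos al)); rewrite -hrel => h.
  apply/andP; split; nra.
rewrite hth asinK ?in_itv //=; split => //.
rewrite cos_asin // hrel sqrtr_sqr ger0_norm // /ctf; apply: divr_ge0.
  lra.
by have := sqr_ge0 (cos al); lra.
Qed.

End SC.

Unset Implicit Arguments. Set Strict Implicit.

Lemma Mbar_eq (R : realType) (al s : R) : 0 < al < pi / 4 -> v al s = s_max al ->
  Mbar (pi / 4) s al = Rx (4 * theta al).
Proof.
move=> hal hv; have [hs hc hsc h3] := al_facts hal.
have [e1 [e2 [e3 e4]]] := @pi4_facts R.
have [hst hct] := theta_facts hal.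
rewrite /Mbar hv !Eexp // /sgn /=.
have hcu : cos al ^+ 2 + 2 * (sin al * sin (pi / 4)) ^+ 2 = 1 by rewrite exprMn e2; lra.
have hc1 : 1 + cos al != 0 by apply: lt0r_neq0; lra.
have [m [ec eu]] := param (k:=2) (ltr0Sn _ 1) hcu hc1.
rewrite (key_m ec eu) /Rx.
have e4t : 4 * theta al = (theta al + theta al) + (theta al + theta al) by ring.
rewrite e4t !sinD !cosD !sinD hst hct /C4f /S4f.
congr (mx3 _ _ _ _ _ _ _ _ _); ring.
Qed.

Lemma Rx_N (R : realType) (p : R) : Rx p *m Npole R = vec3 0 (sin p) (cos p).
Proof. by rewrite /Rx /Npole mx3_vec; congr (vec3 _ _ _); ring. Qed.

Theorem proposition6 (R : realType) (n : int) (al : R) :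
  0 < al < pi / 4 ->
  (Mbar (pi / 4) 0 al ^ n) *m Npole R =
    vec3 0 (sin (4 * n%:~R * theta al)) (cos (4 * n%:~R * theta al)) /\
  (Mbar (pi / 4) (s_max al) al ^ n) *m expmx (s_max al *: Xab al (pi / 4) true true) *m Npole R =
    vec3 0 (sin ((4 * n%:~R + 1) * theta al)) (cos ((4 * n%:~R + 1) * theta al)).
Proof.
move=> hal; have [hs hc hsc h3] := al_facts hal.
have [hst hct] := theta_facts hal.
have e : n%:~R * (4 * theta al) = 4 * n%:~R * theta al by ring.
rewrite (Mbar_eq _ _ _ hal (v0_eq hal)) (Mbar_eq _ _ _ hal (vmax_eq hal)) RxXz e; split.
  exact: Rx_N.
rewrite -mulmxA Eexp // /Npole /sgn /= /Emx mx3_vec /Rx mx3_vec.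
have e2 : (4 * n%:~R + 1) * theta al = 4 * n%:~R * theta al + theta al by ring.
rewrite e2 sinD cosD hst hct /stf /ctf /sgf /kf.
have hq : 1 + cos al ^+ 2 != 0 by apply: lt0r_neq0; have := sqr_ge0 (cos al); lra.
by congr (vec3 _ _ _); field.
Qed.
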